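(* In the setting below, let $n,k\in\mathbb{Z}$ and $0<\alpha\le1$. Then $-n\lhd0\lhd k\lhd n$ over $I_\alpha$ if and only if $-n\lhd -k\lhd0\lhd n$ over $I_\alpha$. In particular, if $n$ is a closest return time with respect to $I_\alpha$, then so is $-n$.
   Context: $\mathbb{T}^1=\mathbb{R}/\mathbb{Z}$, $\omega\in[0,1)$ irrational, $T(\theta,x)=(\theta+\omega,T_\theta(x))$ a continuous map of $\mathbb{T}^2$, homotopic to the identity, with orientation-preserving homeomorphic fibre maps. Let $W=I\times K$ with $I,K\subset\mathbb{T}^1$ open intervals, $|I|<\tfrac12$, $I=(-|I|/2,|I|/2)$ centred at $0$, and $W$ wandering: $T^n(W)\cap W=\emptyset$ for all $n\in\mathbb{N}$. For $0<\alpha\le1$, $I_\alpha:=(-\alpha|I|/2,\alpha|I|/2)$. For $A\subseteq\mathbb{T}^2$, $A_\theta:=\{x:(\theta,x)\in A\}$. Integers $n_1,\dots,n_k$ are comparable over an interval $J$ if $J\subseteq\bigcap_{i=1}^k(I+n_i\omega)$. For $k\ge3$, ''$n_1\lhd\dots\lhd n_k$ over $J$'' means $n_1,\dots,n_k$ are comparable over $J$ and for all $\theta\in J$ and all $x_i\in(T^{n_i}W)_\theta$ the points $x_1,x_2,\dots,x_k$ lie in this cyclic (counterclockwise) order on the circle. $N(\alpha):=\{n\in\mathbb{Z}:n\text{ comparable over }I_\alpha\}=\{n:|n\omega\bmod1|\le\frac{1-\alpha}{2}|I|\}$. $n\in N(\alpha)$ is a closest return time (w.r.t. $I_\alpha$)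 if either ($-n\lhd0\lhd n$ over $I_\alpha$ and there is no $k\in N(\alpha)\setminus\{0\}$ with $|k|<|n|$ and $0\lhd k\lhd n$ over $I_\alpha$) or ($n\lhd0\lhd-n$ over $I_\alpha$ and there is no $k\in N(\alpha)\setminus\{0\}$ with $|k|<|n|$ and $n\lhd k\lhd0$ over $I_\alpha$). *)

(* Defs.v *)
From Stdlib Require Import Reals Lra Lia ZArith List Sorting.Sorted.
Open Scope R_scope.

(** The torus T^2 = R^2 / Z^2 is represented through lifts: points are pairs
    of reals, and all sets below are Z^2-periodic.  The skew product
    T(θ,x) = (θ+ω, T_θ x) is given by a lift F : R -> R -> R of its fibre maps. *)

Record setting := mkSetting {
  om   : R;
  F    : R -> R -> R;  (* lift of the fibre maps: T_θ(x mod 1) = F θ x mod 1 *)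
  lenI : R;            (* |I|, with I = (-|I|/2, |I|/2) *)
  cK   : R;            (* K = (cK, cK + lenK) mod 1 *)
  lenK : R
}.

Definition eqmod1 (x y : R) : Prop := exists z : Z, x - y = IZR z.

Definition Phi (S : setting) (p : R * R) : R * R :=
  (fst p + om S, F S (fst p) (snd p)).

Fixpoint iterPhi (S : setting) (n : nat) (p : R * R) : R * R :=
  match n with
  | O => p
  | Datatypes.S n' => Phi S (iterPhi S n' p)
  end.

Definition inI (S : setting) (θ : R) : Prop :=
  exists j : Z, - lenI S / 2 < θ - IZR j < lenI S / 2.

Definition inK (S : setting) (x : R) : Prop :=
  exists j : Z, cK S < x - IZR j < cK S + lenK S.

Definition inW (S : setting) (p : R * R) : Prop := inI S (fst p) /\ inK S (snd p).

(** q ∈ T^n(W), n ∈ Z (T is a homeomorphism; for n < 0 this is T^{-n} q ∈ W). *)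
Definition inTW (S : setting) (n : Z) (q : R * R) : Prop :=
  if (0 <=? n)%Z then exists p, inW S p /\ iterPhi S (Z.to_nat n) p = q
  else inW S (iterPhi S (Z.to_nat (- n)) q).

Definition standing (S : setting) : Prop :=
  (0 <= om S < 1) /\
  (forall p q : Z, q <> 0%Z -> om S * IZR q <> IZR p) /\
  (forall θ x eps, 0 < eps -> exists delta, 0 < delta /\
     forall θ' x', Rabs (θ' - θ) < delta -> Rabs (x' - x) < delta ->
       Rabs (F S θ' x' - F S θ x) < eps) /\
  (* T well defined on T^2 and homotopic to the identity *)
  (forall θ x, F S (θ + 1) x = F S θ x) /\
  (forall θ x, F S θ (x + 1) = F S θ x + 1) /\
  (forall θ x y, x < y -> F S θ x < F S θ y) /\
  (0 < lenI S < 1/2) /\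
  (0 < lenK S <= 1) /\
  (forall n : nat, (1 <= n)%nat -> forall q, inTW S (Z.of_nat n) q -> inW S q -> False).

Definition Ialpha (S : setting) (alpha : R) (θ : R) : Prop :=
  exists j : Z, Rabs (θ - IZR j) < alpha * lenI S / 2.

Definition comparable (S : setting) (ns : list Z) (J : R -> Prop) : Prop :=
  forall θ, J θ -> Forall (fun n => inI S (θ - IZR n * om S)) ns.

Definition cyc_order (xs : list R) : Prop :=
  exists ys : list R,
    Forall2 eqmod1 ys xs /\ Sorted Rlt ys /\
    match ys with
    | nil => True
    | y0 :: _ => last ys y0 < y0 + 1
    end.

Definition lhd (S : setting) (ns : list Z) (J : R -> Prop) : Prop :=
  (3 <= length ns)%nat /\ comparable S ns J /\
  forall θ xs, J θ -> Forall2 (fun n x => inTW S n (θ, x)) ns xs -> cyc_order xs.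

Definition inN (S : setting) (alpha : R) (n : Z) : Prop :=
  comparable S (n :: nil) (Ialpha S alpha).

Definition closest_return (S : setting) (alpha : R) (n : Z) : Prop :=
  let J := Ialpha S alpha in
  inN S alpha n /\
  ( (lhd S ((- n)%Z :: 0%Z :: n :: nil) J /\
      ~ (exists k : Z, inN S alpha k /\ k <> 0%Z /\ (Z.abs k < Z.abs n)%Z /\
                       lhd S (0%Z :: k :: n :: nil) J))
  \/ (lhd S (n :: 0%Z :: (- n)%Z :: nil) J /\
      ~ (exists k : Z, inN S alpha k /\ k <> 0%Z /\ (Z.abs k < Z.abs n)%Z /\
                       lhd S (n :: k :: 0%Z :: nil) J)) ).

(* Main.v *)
Require Import Defs.
From Stdlib Require Import Reals ZArith List Lra Lia Psatz Sorting.Sorted.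
From Stdlib Require Import Ranalysis5.
Open Scope R_scope.


Definition G (S : setting) (n : nat) (t x : R) : R := snd (iterPhi S n (t, x)).

Lemma iter_fst S n p : fst (iterPhi S n p) = fst p + INR n * om S.
Proof. induction n; simpl. ring. rewrite IHn. destruct n; simpl; ring. Qed.

Lemma iter_eq S n t x : iterPhi S n (t, x) = (t + INR n * om S, G S n t x).
Proof. unfold G. pose proof (iter_fst S n (t,x)) as E. simpl in E. rewrite <- E. destruct (iterPhi S n (t,x)); reflexivity. Qed.

Lemma G_0 S t x : G S 0 t x = x.
Proof. reflexivity. Qed.

Lemma G_S S n t x : G S (Datatypes.S n) t x = F S (t + INR n * om S) (G S n t x).
Proof. unfold G at 1. simpl. rewrite iter_eq. reflexivity. Qed.

Lemma iter_add S m n p : iterPhi S (m + n) p = iterPhi S m (iterPhi S n p).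
Proof. induction m; simpl; auto. rewrite IHm; auto. Qed.

Lemma G_add S m n t x : G S (m + n) t x = G S m (t + INR n * om S) (G S n t x).
Proof. unfold G at 1. rewrite iter_add, iter_eq. reflexivity. Qed.

Lemma nat_ind_Z (P : Z -> Prop) : (forall n:nat, P (Z.of_nat n)) -> (forall n:nat, P (- Z.of_nat n)%Z) -> forall m, P m.
Proof. intros H1 H2 m. destruct (Z_le_gt_dec 0 m).
 - rewrite <- (Z2Nat.id m) by lia. apply H1.
 - replace m with (- Z.of_nat (Z.to_nat (-m)))%Z by lia. apply H2. Qed.

Lemma F_shift_x S (h1 : forall t x, F S t (x + 1) = F S t x + 1) t x (m : Z) :
  F S t (x + IZR m) = F S t x + IZR m.
Proof.
  assert (Hn : forall (k:nat) y, F S t (y + INR k) = F S t y + INR k).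
  { induction k; intros y. simpl. rewrite !Rplus_0_r; auto.
    rewrite S_INR. replace (y + (INR k + 1)) with ((y + INR k) + 1) by ring.
    rewrite h1, IHk. ring. }
  revert x. pattern m. apply nat_ind_Z; intros k x.
  - rewrite <- INR_IZR_INZ. apply Hn.
  - rewrite opp_IZR, <- INR_IZR_INZ.
    pose proof (Hn k (x + - INR k)) as E.
    replace (x + - INR k + INR k) with x in E by ring. lra.
Qed.

Lemma F_shift_t S (h1 : forall t x, F S (t + 1) x = F S t x) t x (m : Z) :
  F S (t + IZR m) x = F S t x.
Proof.
  assert (Hn : forall (k:nat) y, F S (y + INR k) x = F S y x).
  { induction k; intros y. simpl. rewrite !Rplus_0_r; auto.
    rewrite S_INR. replace (y + (INR k + 1)) with ((y + INR k) + 1) by ring.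
    rewrite h1, IHk. ring. }
  revert t. pattern m. apply nat_ind_Z; intros k t.
  - rewrite <- INR_IZR_INZ. apply Hn.
  - rewrite opp_IZR, <- INR_IZR_INZ.
    pose proof (Hn k (t + - INR k)) as E.
    replace (t + - INR k + INR k) with t in E by ring. auto.
Qed.


Lemma st_om S : standing S -> 0 <= om S < 1. Proof. intros H; apply H. Qed.
Lemma st_cont S : standing S -> forall θ x eps, 0 < eps -> exists delta, 0 < delta /\
     forall θ' x', Rabs (θ' - θ) < delta -> Rabs (x' - x) < delta ->
       Rabs (F S θ' x' - F S θ x) < eps.
Proof. intros H; apply H. Qed.
Lemma st_pt S : standing S -> forall θ x, F S (θ + 1) x = F S θ x. Proof. intros H; apply H. Qed.
Lemma st_px S : standing S -> forall θ x, F S θ (x + 1) = F S θ x + 1. Proof. intros H; apply H. Qed.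
Lemma st_mono S : standing S -> forall θ x y, x < y -> F S θ x < F S θ y. Proof. intros H; apply H. Qed.
Lemma st_I S : standing S -> 0 < lenI S < 1/2. Proof. intros H; apply H. Qed.
Lemma st_K S : standing S -> 0 < lenK S <= 1. Proof. intros H; apply H. Qed.
Lemma st_wand S : standing S -> forall n : nat, (1 <= n)%nat -> forall q, inTW S (Z.of_nat n) q -> inW S q -> False.
Proof. intros H; apply H. Qed.

Section G.
Variable S : setting.
Hypothesis hS : standing S.

Lemma G_shift_x n t x m : G S n t (x + IZR m) = G S n t x + IZR m.
Proof. induction n. reflexivity. rewrite !G_S, IHn. apply F_shift_x, st_px, hS. Qed.

Lemma G_shift_t n t x m : G S n (t + IZR m) x = G S n t x.
Proof. induction n. reflexivity. rewrite !G_S, IHn.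
  replace (t + IZR m + INR n * om S) with ((t + INR n * om S) + IZR m) by ring.
  apply F_shift_t, st_pt, hS. Qed.

Lemma G_mono n t x y : x < y -> G S n t x < G S n t y.
Proof. intros H; induction n. exact H. rewrite !G_S. apply (st_mono S hS); auto. Qed.

Lemma G_le n t x y : G S n t x < G S n t y -> x < y.
Proof. intros H. destruct (Rlt_le_dec x y); auto. destruct r.
 - apply (G_mono n t) in H0. lra.
 - subst; lra. Qed.

Lemma G_inj n t x y : G S n t x = G S n t y -> x = y.
Proof. intros H. destruct (Rtotal_order x y) as [h|[h|h]]; auto;
  apply (G_mono n t) in h; lra. Qed.

Lemma cont_eps (h : R -> R) t0 :
  (forall eps, 0 < eps -> exists d, 0 < d /\ forall t, Rabs (t - t0) < d -> Rabs (h t - h t0) < eps) ->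
  continuity_pt h t0.
Proof.
  intros H. unfold continuity_pt, continue_in, limit1_in, limit_in.
  intros eps Heps. destruct (H eps Heps) as [d [Hd H']]. exists d; split; auto.
  intros t [_ Ht]. simpl in *. unfold R_dist in *. apply H'; auto.
Qed.

Lemma F_surj t y : exists x, F S t x = y.
Proof.
  set (v := F S t 0).
  destruct (archimed (Rabs (y - v))) as [H1 _].
  set (N := up (Rabs (y - v))) in *.
  assert (Hc : forall a, continuity_pt (fun x => F S t x - y) a).
  { intros a. apply cont_eps. intros eps He.
    destruct (st_cont S hS t a eps He) as [d [Hd Hd']]. exists d; split; auto.
    intros x Hx. replace (F S t x - y - (F S t a - y)) with (F S t x - F S t a) by ring.
    apply Hd'; auto. rewrite Rminus_diag, Rabs_R0; auto. }
  assert (Hlo : F S t (0 + IZR (- N)) - y < 0).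
  { rewrite F_shift_x by (apply st_px, hS). rewrite opp_IZR. fold v.
    pose proof (Rle_abs (v - y)). rewrite Rabs_minus_sym in H. lra. }
  assert (Hhi : 0 < F S t (0 + IZR N) - y).
  { rewrite F_shift_x by (apply st_px, hS). fold v.
    pose proof (Rle_abs (y - v)). lra. }
  destruct (Rtotal_order (0 + IZR (- N)) (0 + IZR N)) as [h|[h|h]].
  - destruct (IVT_interv (fun x => F S t x - y) _ _ (fun a _ => Hc a) h Hlo Hhi) as [z [_ Hz]].
    exists z. lra.
  - rewrite h in Hlo. lra.
  - rewrite opp_IZR in h. assert (0 <= Rabs (y - v)) by apply Rabs_pos. lra.
Qed.

Lemma G_surj n t y : exists x, G S n t x = y.
Proof.
  revert y. induction n; intros y. exists y; reflexivity.
  destruct (F_surj (t + INR n * om S) y) as [z Hz].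
  destruct (IHn z) as [x Hx]. exists x. rewrite G_S, Hx; auto.
Qed.

Definition JC (g : R -> R -> R) := forall t x eps, 0 < eps -> exists d, 0 < d /\
  forall t' x', Rabs (t' - t) < d -> Rabs (x' - x) < d -> Rabs (g t' x' - g t x) < eps.

Lemma G_JC n : JC (G S n).
Proof.
  induction n; intros t x eps He.
  - exists eps; split; auto.
  - destruct (st_cont S hS (t + INR n * om S) (G S n t x) eps He) as [d1 [Hd1 H1]].
    destruct (IHn t x d1 Hd1) as [d2 [Hd2 H2]].
    exists (Rmin d1 d2); split. apply Rmin_glb_lt; auto.
    intros t' x' Ht Hx. rewrite !G_S. apply H1.
    + replace (t' + INR n * om S - (t + INR n * om S)) with (t' - t) by ring.
      pose proof (Rmin_l d1 d2); lra.
    + apply H2; pose proof (Rmin_r d1 d2); lra.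
Qed.

Lemma path_cont n u0 du v0 dv t0 :
  continuity_pt (fun t => G S n (u0 + t * du) (v0 + t * dv)) t0.
Proof.
  apply cont_eps. intros eps He.
  destruct (G_JC n (u0 + t0 * du) (v0 + t0 * dv) eps He) as [d [Hd H]].
  set (M := 1 + Rabs du + Rabs dv).
  assert (HM : 0 < M) by (unfold M; pose proof (Rabs_pos du); pose proof (Rabs_pos dv); lra).
  exists (d / M); split. apply Rdiv_lt_0_compat; auto.
  intros t Ht. apply H.
  - replace (u0 + t * du - (u0 + t0 * du)) with ((t - t0) * du) by ring.
    rewrite Rabs_mult. 
    assert (Rabs (t - t0) * Rabs du <= Rabs (t - t0) * M).
    { apply Rmult_le_compat_l. apply Rabs_pos. unfold M; pose proof (Rabs_pos dv); lra. }
    assert (Rabs (t - t0) * M < d). { apply (Rmult_lt_compat_r M) in Ht; auto.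
      unfold Rdiv in Ht. rewrite Rmult_assoc, Rinv_l, Rmult_1_r in Ht; lra. }
    lra.
  - replace (v0 + t * dv - (v0 + t0 * dv)) with ((t - t0) * dv) by ring.
    rewrite Rabs_mult.
    assert (Rabs (t - t0) * Rabs dv <= Rabs (t - t0) * M).
    { apply Rmult_le_compat_l. apply Rabs_pos. unfold M; pose proof (Rabs_pos du); lra. }
    assert (Rabs (t - t0) * M < d). { apply (Rmult_lt_compat_r M) in Ht; auto.
      unfold Rdiv in Ht. rewrite Rmult_assoc, Rinv_l, Rmult_1_r in Ht; lra. }
    lra.
Qed.

End G.


Lemma INR_toZ a : (0 <= a)%Z -> INR (Z.to_nat a) = IZR a.
Proof. intros h. rewrite INR_IZR_INZ, Z2Nat.id; auto. Qed.

Lemma inI_shift S x m : inI S (x + IZR m) <-> inI S x.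
Proof. unfold inI; split; intros [j Hj].
 - exists (j - m)%Z. rewrite minus_IZR. replace (x - (IZR j - IZR m)) with (x + IZR m - IZR j) by ring. auto.
 - exists (j + m)%Z. rewrite plus_IZR. replace (x + IZR m - (IZR j + IZR m)) with (x - IZR j) by ring. auto. Qed.

Lemma inK_shift S x m : inK S (x + IZR m) <-> inK S x.
Proof. unfold inK; split; intros [j Hj].
 - exists (j - m)%Z. rewrite minus_IZR. replace (x - (IZR j - IZR m)) with (x + IZR m - IZR j) by ring. auto.
 - exists (j + m)%Z. rewrite plus_IZR. replace (x + IZR m - (IZR j + IZR m)) with (x - IZR j) by ring. auto. Qed.

Lemma inI_ext S x y : x = y -> inI S x -> inI S y. Proof. intros; subst; auto. Qed.

Lemma inTW_pos S a t x : (0 <= a)%Z -> (inTW S a (t,x) <->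
  exists s, inI S (t - IZR a * om S) /\ inK S s /\ G S (Z.to_nat a) (t - IZR a * om S) s = x).
Proof.
  intros h. unfold inTW. rewrite (proj2 (Z.leb_le 0 a) h). split.
  - intros [[p1 p2] [[HI HK] He]]. rewrite iter_eq, INR_toZ in He by auto.
    injection He; intros E1 E2. simpl in *.
    assert (p1 = t - IZR a * om S) by lra. subst p1. exists p2; auto.
  - intros [s [HI [HK He]]]. exists (t - IZR a * om S, s). split. split; auto.
    rewrite iter_eq, INR_toZ by auto. rewrite He. f_equal. ring.
Qed.

Lemma inTW_neg S a t x : (a < 0)%Z -> (inTW S a (t,x) <->
  inI S (t - IZR a * om S) /\ inK S (G S (Z.to_nat (-a)) t x)).
Proof.
  intros h. unfold inTW. rewrite (proj2 (Z.leb_gt 0 a) h). rewrite iter_eq, INR_toZ by lia.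
  unfold inW; simpl. rewrite opp_IZR. replace (t + - IZR a * om S) with (t - IZR a * om S) by ring.
  tauto.
Qed.

Section T.
Variable S : setting.
Hypothesis hS : standing S.

Lemma inTW_shift_x a t x m : inTW S a (t, x + IZR m) <-> inTW S a (t, x).
Proof.
  destruct (Z_lt_le_dec a 0) as [h|h].
  - rewrite !inTW_neg by auto. rewrite G_shift_x, inK_shift by auto. tauto.
  - rewrite !inTW_pos by auto. split; intros [s [H1 [H2 H3]]].
    + exists (s + IZR (-m)). rewrite inK_shift, G_shift_x, H3, opp_IZR by auto.
      repeat split; auto. ring.
    + exists (s + IZR m). rewrite inK_shift, G_shift_x, H3 by auto. auto.
Qed.

Lemma inTW_shift_t a t x m : inTW S a (t + IZR m, x) <-> inTW S a (t, x).
Proof.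
  destruct (Z_lt_le_dec a 0) as [h|h].
  - rewrite !inTW_neg by auto. rewrite G_shift_t by auto.
    replace (t + IZR m - IZR a * om S) with ((t - IZR a * om S) + IZR m) by ring.
    rewrite inI_shift. tauto.
  - rewrite !inTW_pos by auto.
    replace (t + IZR m - IZR a * om S) with ((t - IZR a * om S) + IZR m) by ring.
    setoid_rewrite inI_shift. setoid_rewrite G_shift_t; auto. tauto.
Qed.

Lemma inTW_step (j : nat) a t x :
  inTW S a (t,x) <-> inTW S (a + Z.of_nat j) (t + INR j * om S, G S j t x).
Proof.
  assert (Ej : INR j = IZR (Z.of_nat j)) by apply INR_IZR_INZ.
  assert (Eth : t + INR j * om S - IZR (a + Z.of_nat j) * om S = t - IZR a * om S)
    by (rewrite plus_IZR, Ej; ring).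
  destruct (Z_lt_le_dec a 0) as [h|h]; [destruct (Z_lt_le_dec (a + Z.of_nat j) 0) as [h'|h']|].
  - rewrite !inTW_neg by auto. rewrite Eth.
    assert (E : Z.to_nat (- a) = (Z.to_nat (- (a + Z.of_nat j)) + j)%nat) by lia.
    rewrite E, G_add. tauto.
  - rewrite inTW_neg, inTW_pos by auto. rewrite Eth.
    split.
    + intros [H1 H2]. exists (G S (Z.to_nat (-a)) t x). repeat split; auto.
      assert (E2 : j = (Z.to_nat (a + Z.of_nat j) + Z.to_nat (-a))%nat) by lia.
      rewrite E2 at 2. rewrite G_add, INR_toZ by lia. f_equal. rewrite opp_IZR. ring.
    + intros [s [H1 [H2 H3]]]. split; auto.
      assert (E2 : j = (Z.to_nat (a + Z.of_nat j) + Z.to_nat (-a))%nat) by lia.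
      rewrite E2 in H3 at 2. rewrite G_add, INR_toZ in H3 by lia.
      replace (t + IZR (- a) * om S) with (t - IZR a * om S) in H3 by (rewrite opp_IZR; ring).
      apply G_inj in H3; auto. subst s; auto.
  - rewrite !inTW_pos by lia. rewrite Eth.
    assert (E : Z.to_nat (a + Z.of_nat j) = (j + Z.to_nat a)%nat) by lia.
    rewrite E. setoid_rewrite G_add. rewrite INR_toZ by auto.
    replace (t - IZR a * om S + IZR a * om S) with t by ring.
    split; intros [s [H1 [H2 H3]]]; exists s; repeat split; auto.
    + rewrite H3; auto.
    + apply G_inj in H3; auto.
Qed.

Lemma inTW_zero t x : inTW S 0 (t,x) -> inW S (t,x).
Proof. intros H. rewrite inTW_pos in H by lia. destruct H as [s [H1 [H2 H3]]].
  simpl in H3. unfold G in H3; simpl in H3. subst. split; simpl; auto.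
  replace (t - 0 * om S) with t in H1 by ring. auto. Qed.

Lemma disj_pos a b t x : (0 <= a)%Z -> (a < b)%Z -> inTW S a (t,x) -> inTW S b (t,x) -> False.
Proof.
  intros ha hab Ha Hb. rewrite inTW_pos in Ha, Hb by lia.
  destruct Ha as [s [Ia [Ka Ea]]]. destruct Hb as [s' [Ib [Kb Eb]]].
  assert (E : Z.to_nat b = (Z.to_nat a + Z.to_nat (b - a))%nat) by lia.
  rewrite E, G_add, INR_toZ in Eb by lia.
  replace (t - IZR b * om S + IZR (b - a) * om S) with (t - IZR a * om S) in Eb by (rewrite minus_IZR; ring).
  rewrite <- Ea in Eb. apply G_inj in Eb; auto.
  apply (st_wand S hS (Z.to_nat (b - a))) with (q := (t - IZR a * om S, s)). lia.
  - rewrite Z2Nat.id by lia. rewrite inTW_pos by lia. exists s'. repeat split.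
    + replace (t - IZR a * om S - IZR (b - a) * om S) with (t - IZR b * om S) by (rewrite minus_IZR; ring). auto.
    + auto.
    + replace (t - IZR a * om S - IZR (b - a) * om S) with (t - IZR b * om S) by (rewrite minus_IZR; ring). auto.
  - split; auto.
Qed.

Lemma disj a b t x : inTW S a (t,x) -> inTW S b (t,x) -> a = b.
Proof.
  intros Ha Hb. destruct (Z.lt_total a b) as [h|[h|h]]; auto; exfalso.
  - set (j := Z.to_nat (Z.abs a)).
    rewrite (inTW_step j) in Ha, Hb. eapply disj_pos; [|apply (Zplus_lt_compat_r _ _ (Z.of_nat j) h)|eauto|eauto]. lia.
  - set (j := Z.to_nat (Z.abs b)).
    rewrite (inTW_step j) in Ha, Hb. eapply disj_pos; [|apply (Zplus_lt_compat_r _ _ (Z.of_nat j) h)|eauto|eauto]. lia.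
Qed.

Lemma nonempty a t : inI S (t - IZR a * om S) -> exists x, inTW S a (t,x).
Proof.
  intros H. pose proof (st_K S hS) as HK.
  assert (K0 : inK S (cK S + lenK S / 2)) by (exists 0%Z; simpl; lra).
  destruct (Z_lt_le_dec a 0) as [h|h].
  - destruct (G_surj S hS (Z.to_nat (-a)) t (cK S + lenK S / 2)) as [x Hx].
    exists x. rewrite inTW_neg by auto. rewrite Hx; auto.
  - exists (G S (Z.to_nat a) (t - IZR a * om S) (cK S + lenK S / 2)).
    rewrite inTW_pos by auto. eauto.
Qed.

End T.


Definition C (x y z : R) : Prop :=
  exists m1 m2 : Z, x < y + IZR m1 < z + IZR m2 /\ z + IZR m2 < x + 1.
Definition C4 (x y z w : R) : Prop :=
  exists m1 m2 m3 : Z, x < y + IZR m1 < z + IZR m2 /\ z + IZR m2 < w + IZR m3 < x + 1.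

Lemma int_uniq (m1 m2 : Z) (u : R) : u < IZR m1 < u + 1 -> u < IZR m2 < u + 1 -> m1 = m2.
Proof. intros H1 H2. assert (IZR m1 - IZR m2 < 1) by lra. assert (-1 < IZR m1 - IZR m2) by lra.
  rewrite <- minus_IZR in *. apply lt_IZR in H. apply lt_IZR in H0. lia. Qed.

Lemma no_int01 (m : Z) : 0 < IZR m < 1 -> False.
Proof. intros [h1 h2]. apply lt_IZR in h1. apply lt_IZR in h2. lia. Qed.

Lemma C_rot x y z : C x y z -> C y z x.
Proof. intros [m1 [m2 H]]. exists (m2 - m1)%Z, (1 - m1)%Z. rewrite !minus_IZR. lra. Qed.

Lemma C_trans x y z w : C x y z -> C x z w -> C x y w.
Proof. intros [m1 [m2 H]] [m2' [m3 H']].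
  assert (m2 = m2') by (apply (int_uniq _ _ (x - z)); lra). subst.
  exists m1, m3. lra. Qed.

Lemma C_comb1 x y z w : C x y z -> C x z w -> C y z w.
Proof. intros [m1 [m2 H]] [m2' [m3 H']].
  assert (m2 = m2') by (apply (int_uniq _ _ (x - z)); lra). subst.
  exists (m2' - m1)%Z, (m3 - m1)%Z. rewrite !minus_IZR. lra. Qed.

Lemma C4_of1 x y z w : C x y z -> C x z w -> C4 x y z w.
Proof. intros [m1 [m2 H]] [m2' [m3 H']].
  assert (m2 = m2') by (apply (int_uniq _ _ (x - z)); lra). subst.
  exists m1, m2', m3. lra. Qed.

Lemma C4_of2 x y z w : C x y w -> C y z w -> C4 x y z w.
Proof. intros [m1 [m3 H]] [m2 [m3' H']].
  assert (m3 = (m3' + m1)%Z) by (apply (int_uniq _ _ (y + IZR m1 - w)); rewrite ?plus_IZR; lra). subst.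
  exists m1, (m2 + m1)%Z, (m3' + m1)%Z. rewrite !plus_IZR in *. lra. Qed.

Lemma C4_xyz x y z w : C4 x y z w -> C x y z.
Proof. intros [m1 [m2 [m3 H]]]. exists m1, m2. lra. Qed.
Lemma C4_xyw x y z w : C4 x y z w -> C x y w.
Proof. intros [m1 [m2 [m3 H]]]. exists m1, m3. lra. Qed.
Lemma C4_xzw x y z w : C4 x y z w -> C x z w.
Proof. intros [m1 [m2 [m3 H]]]. exists m2, m3. lra. Qed.
Lemma C4_yzw x y z w : C4 x y z w -> C y z w.
Proof. intros H. apply C4_xyz in H as H1. apply C4_xzw in H as H2. eapply C_comb1; eauto. Qed.

Lemma C_xxz x z : C x x z -> False.
Proof. intros [m1 [m2 H]]. apply (no_int01 m1). lra. Qed.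
Lemma C_xyy x y : C x y y -> False.
Proof. intros [m1 [m2 H]]. apply (no_int01 (m2 - m1)). rewrite minus_IZR. lra. Qed.
Lemma C_xyx x y : C x y x -> False.
Proof. intros [m1 [m2 H]]. apply (no_int01 m2). lra. Qed.

Lemma C_map (g : R -> R) x y z :
  (forall a b, a < b -> g a < g b) -> (forall a (m:Z), g (a + IZR m) = g a + IZR m) ->
  (C x y z <-> C (g x) (g y) (g z)).
Proof.
  intros Hm Hs.
  assert (Hr : forall a b, g a < g b -> a < b).
  { intros a b h. destruct (Rlt_le_dec a b); auto. destruct r. apply Hm in H; lra. subst; lra. }
  assert (E1 : g (x + 1) = g x + 1) by (apply (Hs x 1%Z)).
  split; intros [m1 [m2 H]]; exists m1, m2.
  - rewrite <- !Hs; rewrite <- ?E1. repeat split; apply Hm; lra.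
  - rewrite <- !Hs in H; rewrite <- ?E1 in H. repeat split; apply Hr; tauto.
Qed.

Ltac crush_sorted := repeat match goal with
  | h : Sorted _ (_ :: _) |- _ => inversion_clear h
  | h : HdRel _ _ (_ :: _) |- _ => inversion_clear h end.

Lemma sorted3 a b c : Sorted Rlt (a :: b :: c :: nil) -> a < b /\ b < c.
Proof. intros H. crush_sorted. lra. Qed.
Lemma sorted4 a b c d : Sorted Rlt (a :: b :: c :: d :: nil) -> a < b /\ b < c /\ c < d.
Proof. intros H. crush_sorted. lra. Qed.

Lemma cyc3 x y z : cyc_order (x :: y :: z :: nil) <-> C x y z.
Proof.
  split.
  - intros [ys [H1 [H2 H3]]].
    inversion H1 as [|y0 x0 l1 l2 E0 F1]; subst.
    inversion F1 as [|y1 x1 l3 l4 E1 F2]; subst.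
    inversion F2 as [|y2 x2 l5 l6 E2 F3]; subst.
    inversion F3; subst.
    destruct E0 as [z0 E0], E1 as [z1 E1], E2 as [z2 E2].
    apply sorted3 in H2. simpl in H3. exists (z1 - z0)%Z, (z2 - z0)%Z. rewrite !minus_IZR. lra.
  - intros [m1 [m2 H]]. exists (x :: y + IZR m1 :: z + IZR m2 :: nil).
    repeat split.
    + repeat constructor; [exists 0%Z|exists m1|exists m2]; simpl; ring.
    + repeat constructor; lra.
    + simpl; lra.
Qed.

Lemma cyc4 x y z w : cyc_order (x :: y :: z :: w :: nil) <-> C4 x y z w.
Proof.
  split.
  - intros [ys [H1 [H2 H3]]].
    inversion H1 as [|y0 x0 l1 l2 E0 F1]; subst.
    inversion F1 as [|y1 x1 l3 l4 E1 F2]; subst.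
    inversion F2 as [|y2 x2 l5 l6 E2 F3]; subst.
    inversion F3 as [|y3 x3 l7 l8 E3 F4]; subst.
    inversion F4; subst.
    destruct E0 as [z0 E0], E1 as [z1 E1], E2 as [z2 E2], E3 as [z3 E3].
    apply sorted4 in H2. simpl in H3. exists (z1 - z0)%Z, (z2 - z0)%Z, (z3 - z0)%Z. rewrite !minus_IZR. lra.
  - intros [m1 [m2 [m3 H]]]. exists (x :: y + IZR m1 :: z + IZR m2 :: w + IZR m3 :: nil).
    repeat split.
    + repeat constructor; [exists 0%Z|exists m1|exists m2|exists m3]; simpl; ring.
    + repeat constructor; lra.
    + simpl; lra.
Qed.

Lemma stay_int (h : R -> R) (m : Z) :
  (forall t, 0 <= t <= 1 -> continuity_pt h t) ->
  (forall t, 0 <= t <= 1 -> forall q : Z, h t <> IZR q) ->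
  IZR m < h 0 < IZR m + 1 -> IZR m < h 1 < IZR m + 1.
Proof.
  intros Hc Hn H0. split.
  - destruct (Rlt_le_dec (IZR m) (h 1)) as [h1|h1]; auto. exfalso.
    destruct h1 as [h1|h1]; [|apply (Hn 1 ltac:(lra) m); auto].
    destruct (IVT_interv (fun t => IZR m - h t) 0 1) as [z [Hz1 Hz2]].
    + intros a Ha. apply continuity_pt_minus; [apply continuity_pt_const; intros ??; auto|auto].
    + lra.
    + lra.
    + lra.
    + apply (Hn z Hz1 m). lra.
  - destruct (Rlt_le_dec (h 1) (IZR m + 1)) as [h1|h1]; auto. exfalso.
    destruct h1 as [h1|h1]; [|apply (Hn 1 ltac:(lra) (m+1)%Z); rewrite plus_IZR; auto].
    destruct (IVT_interv (fun t => h t - (IZR m + 1)) 0 1) as [z [Hz1 Hz2]].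
    + intros a Ha. apply continuity_pt_minus; [auto|apply continuity_pt_const; intros ??; auto].
    + lra.
    + lra.
    + lra.
    + apply (Hn z Hz1 (m+1)%Z). rewrite plus_IZR. lra.
Qed.

Lemma C_path (f g h : R -> R) :
  (forall t, 0 <= t <= 1 -> continuity_pt f t) ->
  (forall t, 0 <= t <= 1 -> continuity_pt g t) ->
  (forall t, 0 <= t <= 1 -> continuity_pt h t) ->
  (forall t, 0 <= t <= 1 -> forall q : Z, g t - f t <> IZR q) ->
  (forall t, 0 <= t <= 1 -> forall q : Z, h t - f t <> IZR q) ->
  (forall t, 0 <= t <= 1 -> forall q : Z, h t - g t <> IZR q) ->
  C (f 0) (g 0) (h 0) -> C (f 1) (g 1) (h 1).
Proof.
  intros cf cg ch n1 n2 n3 [m1 [m2 H]]. exists m1, m2.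
  assert (A1 := stay_int (fun t => g t - f t) (-m1)%Z).
  assert (A2 := stay_int (fun t => h t - f t) (-m2)%Z).
  assert (A3 := stay_int (fun t => h t - g t) (m1 - m2)%Z).
  simpl in A1, A2, A3.
  assert (B1 : IZR (- m1) < g 1 - f 1 < IZR (- m1) + 1).
  { apply A1; [intros; apply continuity_pt_minus; auto|auto|rewrite opp_IZR; lra]. }
  assert (B2 : IZR (- m2) < h 1 - f 1 < IZR (- m2) + 1).
  { apply A2; [intros; apply continuity_pt_minus; auto|auto|rewrite opp_IZR; lra]. }
  assert (B3 : IZR (m1 - m2) < h 1 - g 1 < IZR (m1 - m2) + 1).
  { apply A3; [intros; apply continuity_pt_minus; auto|auto|rewrite minus_IZR; lra]. }
  rewrite opp_IZR in B1, B2. rewrite minus_IZR in B3. lra.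
Qed.


Lemma convex c p q u : -c < p < c -> -c < q < c -> 0 <= u <= 1 -> -c < p + u * (q - p) < c.
Proof. intros Hp Hq Hu.
  assert (E : p + u * (q - p) = (1 - u) * p + u * q) by ring. rewrite E.
  destruct (Req_dec u 0). subst. lra.
  assert (0 < u) by lra.
  split.
  - assert ((1 - u) * (-c) <= (1-u) * p) by (apply Rmult_le_compat_l; lra).
    assert (u * (-c) < u * q) by (apply Rmult_lt_compat_l; lra). nra.
  - assert ((1 - u) * p <= (1-u) * c) by (apply Rmult_le_compat_l; lra).
    assert (u * q < u * c) by (apply Rmult_lt_compat_l; lra). nra.
Qed.

Definition Ord3 S a b c t := forall x y z,
  inTW S a (t,x) -> inTW S b (t,y) -> inTW S c (t,z) -> C x y z.

Section O.
Variable S : setting.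
Hypothesis hS : standing S.

Lemma Ord3_per a b c t m : Ord3 S a b c (t + IZR m) <-> Ord3 S a b c t.
Proof. unfold Ord3. setoid_rewrite inTW_shift_t; auto. tauto. Qed.

Lemma Gmap_C j t x y z : C x y z <-> C (G S j t x) (G S j t y) (G S j t z).
Proof. apply C_map. intros; apply G_mono; auto. intros; apply G_shift_x; auto. Qed.

Lemma Ord3_step (j : nat) a b c t : Ord3 S a b c t <->
  Ord3 S (a + Z.of_nat j) (b + Z.of_nat j) (c + Z.of_nat j) (t + INR j * om S).
Proof.
  split; intros H.
  - intros y1 y2 y3 H1 H2 H3.
    destruct (G_surj S hS j t y1) as [x1 E1].
    destruct (G_surj S hS j t y2) as [x2 E2].
    destruct (G_surj S hS j t y3) as [x3 E3]. subst.
    rewrite <- !inTW_step in H1, H2, H3 by auto.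
    apply Gmap_C. apply H; auto.
  - intros x1 x2 x3 H1 H2 H3.
    rewrite (inTW_step S hS j) in H1, H2, H3.
    apply (Gmap_C j t). apply H; auto.
Qed.

Lemma Ord3_T1 j p e a b c s : IZR j * om S = IZR p + e ->
  (Ord3 S a b c s <-> Ord3 S (a + j) (b + j) (c + j) (s + e)).
Proof.
  intros Hj. destruct (Z_lt_le_dec j 0) as [h|h].
  - set (jn := Z.to_nat (-j)).
    rewrite (Ord3_step jn (a + j)).
    assert (E1 : (a + j + Z.of_nat jn = a)%Z) by (unfold jn; lia).
    assert (E2 : (b + j + Z.of_nat jn = b)%Z) by (unfold jn; lia).
    assert (E3 : (c + j + Z.of_nat jn = c)%Z) by (unfold jn; lia).
    rewrite E1, E2, E3.
    assert (E4 : s + e + INR jn * om S = s + IZR (- p)).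
    { unfold jn. rewrite INR_toZ by lia. rewrite !opp_IZR. nra. }
    rewrite E4, Ord3_per. tauto.
  - rewrite <- (Z2Nat.id j) at 1 2 3 by auto.
    rewrite (Ord3_step (Z.to_nat j)), INR_toZ, Hj by auto.
    replace (s + (IZR p + e)) with ((s + e) + IZR p) by ring.
    rewrite Ord3_per. tauto.
Qed.

Lemma fib_path a t0 t1 x : (0 <= a)%Z -> inTW S a (t1, x) ->
  (forall u, 0 <= u <= 1 -> inI S (t0 + u * (t1 - t0) - IZR a * om S)) ->
  exists X : R -> R, (forall u, continuity_pt X u) /\
    (forall u, 0 <= u <= 1 -> inTW S a (t0 + u * (t1 - t0), X u)) /\ X 1 = x.
Proof.
  intros ha Hx Hp. rewrite inTW_pos in Hx by auto.
  destruct Hx as [s [HI [[ja HK] Hs]]].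
  pose proof (st_K S hS) as HKp.
  set (s0 := cK S + lenK S / 2 + IZR ja).
  exists (fun u => G S (Z.to_nat a) ((t0 - IZR a * om S) + u * (t1 - t0)) (s0 + u * (s - s0))).
  split; [|split].
  - intros u. apply path_cont; auto.
  - intros u Hu. rewrite inTW_pos by auto. exists (s0 + u * (s - s0)). split; [|split].
    + apply Hp; auto.
    + exists ja. assert (-(lenK S/2) < s0 - IZR ja - (cK S + lenK S/2) < lenK S/2) by (unfold s0; lra).
      assert (-(lenK S/2) < s - IZR ja - (cK S + lenK S/2) < lenK S/2) by lra.
      pose proof (convex (lenK S/2) _ _ u H H0 Hu).
      replace (s0 + u * (s - s0) - IZR ja) with
        (cK S + lenK S / 2 + ((s0 - IZR ja - (cK S + lenK S / 2)) + u * ((s - IZR ja - (cK S + lenK S / 2)) - (s0 - IZR ja - (cK S + lenK S / 2))))) by ring.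
      lra.
    + f_equal. ring.
  - simpl. rewrite <- Hs. f_equal; ring.
Qed.

Lemma T2pos a b c t0 t1 : (0 <= a)%Z -> (0 <= b)%Z -> (0 <= c)%Z ->
  a <> b -> b <> c -> a <> c ->
  (forall u, 0 <= u <= 1 -> inI S (t0 + u * (t1 - t0) - IZR a * om S) /\
      inI S (t0 + u * (t1 - t0) - IZR b * om S) /\ inI S (t0 + u * (t1 - t0) - IZR c * om S)) ->
  Ord3 S a b c t0 -> Ord3 S a b c t1.
Proof.
  intros ha hb hc nab nbc nac Hp H x y z Hx Hy Hz.
  destruct (fib_path a t0 t1 x ha Hx (fun u h => proj1 (Hp u h))) as [X [cX [fX eX]]].
  destruct (fib_path b t0 t1 y hb Hy (fun u h => proj1 (proj2 (Hp u h)))) as [Y [cY [fY eY]]].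
  destruct (fib_path c t0 t1 z hc Hz (fun u h => proj2 (proj2 (Hp u h)))) as [W [cZ [fZ eZ]]].
  subst x y z.
  assert (Hd : forall a' b' (P Q : R -> R), a' <> b' ->
     (forall u, 0 <= u <= 1 -> inTW S a' (t0 + u * (t1 - t0), P u)) ->
     (forall u, 0 <= u <= 1 -> inTW S b' (t0 + u * (t1 - t0), Q u)) ->
     forall u, 0 <= u <= 1 -> forall q : Z, Q u - P u <> IZR q).
  { intros a' b' P Q n fP fQ u Hu q E. apply n.
    apply (disj S hS a' b' (t0 + u * (t1 - t0)) (P u)); auto.
    replace (P u) with (Q u + IZR (-q)) by (rewrite opp_IZR; lra).
    rewrite inTW_shift_x; auto. }
  apply C_path; auto.
  - apply Hd with a b; auto.
  - apply Hd with a c; auto.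
  - apply Hd with b c; auto.
  - apply H.
    + replace t0 with (t0 + 0 * (t1 - t0)) at 1 by ring. apply fX; lra.
    + replace t0 with (t0 + 0 * (t1 - t0)) at 1 by ring. apply fY; lra.
    + replace t0 with (t0 + 0 * (t1 - t0)) at 1 by ring. apply fZ; lra.
Qed.

Lemma T2 a b c t0 t1 : a <> b -> b <> c -> a <> c ->
  (forall u, 0 <= u <= 1 -> inI S (t0 + u * (t1 - t0) - IZR a * om S) /\
      inI S (t0 + u * (t1 - t0) - IZR b * om S) /\ inI S (t0 + u * (t1 - t0) - IZR c * om S)) ->
  Ord3 S a b c t0 -> Ord3 S a b c t1.
Proof.
  intros nab nbc nac Hp H.
  set (j := Z.to_nat (Z.abs a + Z.abs b + Z.abs c)).
  rewrite (Ord3_step j) in H |- *.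
  assert (Ej : INR j = IZR (Z.of_nat j)) by apply INR_IZR_INZ.
  apply T2pos with (t0 := t0 + INR j * om S); try lia; auto.
  intros u Hu. destruct (Hp u Hu) as [h1 [h2 h3]].
  rewrite !plus_IZR, Ej.
  replace (t0 + IZR (Z.of_nat j) * om S + u * (t1 + IZR (Z.of_nat j) * om S - (t0 + IZR (Z.of_nat j) * om S))) with
    (t0 + u * (t1 - t0) + IZR (Z.of_nat j) * om S) by ring.
  split; [|split]; [revert h1|revert h2|revert h3]; apply inI_ext; ring.
Qed.

Lemma T2e a b c pa pb pc ea eb ec t0 t1 : a <> b -> b <> c -> a <> c ->
  IZR a * om S = IZR pa + ea -> IZR b * om S = IZR pb + eb -> IZR c * om S = IZR pc + ec ->
  -(lenI S/2) < t0 - ea < lenI S/2 -> -(lenI S/2) < t1 - ea < lenI S/2 ->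
  -(lenI S/2) < t0 - eb < lenI S/2 -> -(lenI S/2) < t1 - eb < lenI S/2 ->
  -(lenI S/2) < t0 - ec < lenI S/2 -> -(lenI S/2) < t1 - ec < lenI S/2 ->
  Ord3 S a b c t0 -> Ord3 S a b c t1.
Proof.
  intros nab nbc nac Ea Eb Ec h1 h2 h3 h4 h5 h6. apply T2; auto.
  intros u Hu.
  assert (K : forall i p e, IZR i * om S = IZR p + e ->
     -(lenI S/2) < t0 - e < lenI S/2 -> -(lenI S/2) < t1 - e < lenI S/2 ->
     inI S (t0 + u * (t1 - t0) - IZR i * om S)).
  { intros i p e E g1 g2. exists (- p)%Z. rewrite E, opp_IZR.
    pose proof (convex (lenI S/2) _ _ u g1 g2 Hu).
    replace (t0 + u * (t1 - t0) - (IZR p + e) - - IZR p) with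
      (t0 - e + u * (t1 - e - (t0 - e))) by ring. lra. }
  split; [|split]; eapply K; eauto.
Qed.

Lemma cmp_e i p e s : IZR i * om S = IZR p + e ->
  -(lenI S/2) < s - e < lenI S/2 -> inI S (s - IZR i * om S).
Proof. intros E h. exists (- p)%Z. rewrite E, opp_IZR.
  replace (s - (IZR p + e) - - IZR p) with (s - e) by ring. lra. Qed.

Lemma Ord3_distinct a b c t : Ord3 S a b c t ->
  inI S (t - IZR a * om S) -> inI S (t - IZR b * om S) -> inI S (t - IZR c * om S) ->
  a <> b /\ b <> c /\ a <> c.
Proof.
  intros H ha hb hc.
  destruct (nonempty S hS a t ha) as [x hx].
  destruct (nonempty S hS b t hb) as [y hy].
  destruct (nonempty S hS c t hc) as [z hz].
  repeat split; intros E; subst.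
  - apply (C_xxz x z). apply H; auto.
  - apply (C_xyy x y). apply H; auto.
  - apply (C_xyx x y). apply H; auto.
Qed.

End O.


Definition cmpJ S (J : R -> Prop) (a : Z) := forall t, J t -> inI S (t - IZR a * om S).

Lemma lhd3_iff S a b c J : lhd S (a :: b :: c :: nil) J <->
  (cmpJ S J a /\ cmpJ S J b /\ cmpJ S J c) /\ (forall t, J t -> Ord3 S a b c t).
Proof.
  unfold lhd, comparable, cmpJ, Ord3. split.
  - intros [_ [H1 H2]]. split.
    + repeat split; intros t Ht; specialize (H1 t Ht);
      rewrite !Forall_cons_iff in H1; tauto.
    + intros t Ht x y z Hx Hy Hz. apply cyc3. apply (H2 t); auto;
      repeat constructor; auto.
  - intros [[H1 [H2 H3]] H4]. split; [simpl; lia|split].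
    + intros t Ht. repeat constructor; auto.
    + intros t xs Ht HF.
      inversion HF as [|a1 x1 l1 l1' E1 F1]; subst.
      inversion F1 as [|a2 x2 l2 l2' E2 F2]; subst.
      inversion F2 as [|a3 x3 l3 l3' E3 F3]; subst.
      inversion F3; subst. apply cyc3. apply (H4 t); auto.
Qed.

Definition Ord4 S a b c d t := forall x y z w,
  inTW S a (t,x) -> inTW S b (t,y) -> inTW S c (t,z) -> inTW S d (t,w) -> C4 x y z w.

Lemma lhd4_iff S a b c d J : lhd S (a :: b :: c :: d :: nil) J <->
  (cmpJ S J a /\ cmpJ S J b /\ cmpJ S J c /\ cmpJ S J d) /\ (forall t, J t -> Ord4 S a b c d t).
Proof.
  unfold lhd, comparable, cmpJ, Ord4. split.
  - intros [_ [H1 H2]]. split.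
    + repeat split; intros t Ht; specialize (H1 t Ht);
      rewrite !Forall_cons_iff in H1; tauto.
    + intros t Ht x y z w Hx Hy Hz Hw. apply cyc4. apply (H2 t); auto;
      repeat constructor; auto.
  - intros [[H1 [H2 [H3 H5]]] H4]. split; [simpl; lia|split].
    + intros t Ht. repeat constructor; auto.
    + intros t xs Ht HF.
      inversion HF as [|a1 x1 l1 l1' E1 F1]; subst.
      inversion F1 as [|a2 x2 l2 l2' E2 F2]; subst.
      inversion F2 as [|a3 x3 l3 l3' E3 F3]; subst.
      inversion F3 as [|a4 x4 l4 l4' E4 F4]; subst.
      inversion F4; subst. apply cyc4. apply (H4 t); auto.
Qed.

Section M.
Variable S : setting.
Hypothesis hS : standing S.

Lemma lhd_of1 a b c d J : lhd S (a :: b :: c :: nil) J -> lhd S (a :: c :: d :: nil) J ->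
  lhd S (a :: b :: c :: d :: nil) J.
Proof.
  rewrite !lhd3_iff, lhd4_iff. intros [[h1 [h2 h3]] H] [[_ [_ h4]] H'].
  split; [tauto|]. intros t Ht x y z w Hx Hy Hz Hw. apply C4_of1.
  apply (H t); auto. apply (H' t); auto.
Qed.

Lemma lhd_of2 a b c d J : lhd S (a :: b :: d :: nil) J -> lhd S (b :: c :: d :: nil) J ->
  lhd S (a :: b :: c :: d :: nil) J.
Proof.
  rewrite !lhd3_iff, lhd4_iff. intros [[h1 [h2 h3]] H] [[_ [h4 _]] H'].
  split; [tauto|]. intros t Ht x y z w Hx Hy Hz Hw. apply C4_of2.
  apply (H t); auto. apply (H' t); auto.
Qed.

Lemma lhd_xyz a b c d J : lhd S (a :: b :: c :: d :: nil) J -> lhd S (a :: b :: c :: nil) J.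
Proof.
  rewrite lhd3_iff, lhd4_iff. intros [[h1 [h2 [h3 h4]]] H]. split; [tauto|].
  intros t Ht x y z Hx Hy Hz. destruct (nonempty S hS d t (h4 t Ht)) as [w Hw].
  apply (C4_xyz _ _ _ w). apply (H t); auto.
Qed.

Lemma lhd_yzw a b c d J : lhd S (a :: b :: c :: d :: nil) J -> lhd S (b :: c :: d :: nil) J.
Proof.
  rewrite lhd3_iff, lhd4_iff. intros [[h1 [h2 [h3 h4]]] H]. split; [tauto|].
  intros t Ht x y z Hx Hy Hz. destruct (nonempty S hS a t (h1 t Ht)) as [w Hw].
  apply (C4_yzw w). apply (H t); auto.
Qed.

Lemma lhd_xzw a b c d J : lhd S (a :: b :: c :: d :: nil) J -> lhd S (a :: c :: d :: nil) J.
Proof.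
  rewrite lhd3_iff, lhd4_iff. intros [[h1 [h2 [h3 h4]]] H]. split; [tauto|].
  intros t Ht x y z Hx Hy Hz. destruct (nonempty S hS b t (h2 t Ht)) as [w Hw].
  apply (C4_xzw x w). apply (H t); auto.
Qed.

Lemma lhd_xyw a b c d J : lhd S (a :: b :: c :: d :: nil) J -> lhd S (a :: b :: d :: nil) J.
Proof.
  rewrite lhd3_iff, lhd4_iff. intros [[h1 [h2 [h3 h4]]] H]. split; [tauto|].
  intros t Ht x y z Hx Hy Hz. destruct (nonempty S hS c t (h3 t Ht)) as [w Hw].
  apply (C4_xyw x y w). apply (H t); auto.
Qed.

End M.


Lemma consts S alpha : standing S -> 0 < alpha <= 1 ->
  0 < alpha * lenI S / 2 <= lenI S / 2 /\ lenI S / 2 < 1/4.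
Proof. intros hS ha. pose proof (st_I S hS). split; [split|]; try nra. Qed.

Lemma extract S alpha i : standing S -> 0 < alpha <= 1 -> cmpJ S (Ialpha S alpha) i ->
  exists p e, IZR i * om S = IZR p + e /\
    -(lenI S / 2 - alpha * lenI S / 2) <= e <= lenI S / 2 - alpha * lenI S / 2.
Proof.
  intros hS ha H. destruct (consts S alpha hS ha) as [[a0 ac] c4].
  set (c := lenI S / 2) in *. set (a := alpha * lenI S / 2) in *.
  assert (J0 : Ialpha S alpha 0) by (exists 0%Z; rewrite Rminus_0_r, Rabs_R0; fold a; lra).
  destruct (H 0 J0) as [j Hj]. fold c in Hj.
  exists (- j)%Z, (IZR i * om S + IZR j). split; [rewrite opp_IZR; ring|].
  set (e := IZR i * om S + IZR j) in *.
  assert (Hie : IZR i * om S = e - IZR j) by (unfold e; ring).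
  assert (Ea : a = alpha * lenI S / 2) by reflexivity.
  assert (Ec : c = lenI S / 2) by reflexivity.
  clearbody e. clearbody a c.
  split.
  - destruct (Rle_dec (-(c - a)) e) as [h|h]; auto. exfalso.
    remember ((e + c + a) / 2) as θ eqn:Eθ.
    assert (Jt : Ialpha S alpha θ).
    { exists 0%Z. rewrite <- Ea. simpl IZR. rewrite Rminus_0_r. apply Rabs_def1; lra. }
    destruct (H θ Jt) as [j' Hj'].  rewrite Hie in Hj'.
    destruct (Z_le_gt_dec (j' - j) 0) as [r|r].
    + apply IZR_le in r. rewrite minus_IZR in r. lra.
    + assert (r' : (1 <= j' - j)%Z) by lia. apply IZR_le in r'. rewrite minus_IZR in r'.
      lra.
  - destruct (Rle_dec e (c - a)) as [h|h]; auto. exfalso.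
    remember ((e - c - a) / 2) as θ eqn:Eθ.
    assert (Jt : Ialpha S alpha θ).
    { exists 0%Z. rewrite <- Ea. simpl IZR. rewrite Rminus_0_r. apply Rabs_def1; lra. }
    destruct (H θ Jt) as [j' Hj'].  rewrite Hie in Hj'.
    destruct (Z_le_gt_dec 0 (j' - j)) as [r|r].
    + apply IZR_le in r. rewrite minus_IZR in r. lra.
    + assert (r' : (j' - j <= -1)%Z) by lia. apply IZR_le in r'. rewrite minus_IZR in r'.
      lra.
Qed.

Lemma Ord3_conv S a b c t a' b' c' t' : a = a' -> b = b' -> c = c' -> t = t' ->
  Ord3 S a b c t -> Ord3 S a' b' c' t'.
Proof. intros; subst; auto. Qed.

Lemma E0 S : IZR 0 * om S = IZR 0 + 0. Proof. simpl; ring. Qed.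
Lemma Eopp S n p e : IZR n * om S = IZR p + e -> IZR (- n) * om S = IZR (- p) + - e.
Proof. intros h. rewrite !opp_IZR. lra. Qed.
Lemma Esub S n k pn en pk ek : IZR n * om S = IZR pn + en -> IZR k * om S = IZR pk + ek ->
  IZR (k - n) * om S = IZR (pk - pn) + (ek - en).
Proof. intros h1 h2. rewrite !minus_IZR. lra. Qed.

Section F.
Variable S : setting.
Hypothesis hS : standing S.

Lemma fwd a n k pn en pk ek : 0 < a <= lenI S / 2 ->
  IZR n * om S = IZR pn + en -> IZR k * om S = IZR pk + ek ->
  -(lenI S / 2 - a) <= en <= lenI S / 2 - a -> -(lenI S / 2 - a) <= ek <= lenI S / 2 - a ->
  (forall s, -a < s < a -> Ord3 S (-n) 0 k s /\ Ord3 S 0 k n s) ->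
  forall τ, -a < τ < a -> Ord3 S (-n) (-k) 0 τ.
Proof.
  intros ha En Ek hn hk HL τ hτ.
  pose proof (E0 S) as Z0. pose proof (Eopp S n pn en En) as Emn.
  pose proof (Esub S n k pn en pk ek En Ek) as Ekn.
  destruct (HL 0 ltac:(lra)) as [H1 H2].
  destruct (Ord3_distinct S hS _ _ _ _ H1) as [d1 [d2 d3]];
    [eapply cmp_e; [exact Emn|lra]|eapply cmp_e; [exact Z0|lra]|eapply cmp_e; [exact Ek|lra]|].
  destruct (Ord3_distinct S hS _ _ _ _ H2) as [d4 [d5 d6]];
    [eapply cmp_e; [exact Z0|lra]|eapply cmp_e; [exact Ek|lra]|eapply cmp_e; [exact En|lra]|].
  destruct (HL τ hτ) as [Hτ1 Hτ2].
  set (φ := (ek - en) / 2).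
  assert (Ha : Ord3 S 0 k n (φ + en)).
  { eapply (T2e S hS 0 k n _ _ _ 0 ek en τ); eauto; unfold φ; lra. }
  assert (Hb : Ord3 S (-n) (k - n) 0 φ).
  { rewrite (Ord3_T1 S hS (-n) (-pn) (-en)) in Ha by exact Emn.
    revert Ha; apply Ord3_conv; try lia; ring. }
  assert (Hc : Ord3 S (-n) 0 k φ).
  { eapply (T2e S hS (-n) 0 k _ _ _ (-en) 0 ek τ); eauto; unfold φ; lra. }
  assert (Hd : Ord3 S (k - n) 0 k φ).
  { intros x y z Hx Hy Hz.
    destruct (nonempty S hS (-n) φ) as [w Hw]. eapply cmp_e; [exact Emn|unfold φ; lra].
    apply (C_comb1 w). apply Hb; auto. apply Hc; auto. }
  assert (He : Ord3 S (k - n) 0 k (τ + ek)).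
  { eapply (T2e S hS (k - n) 0 k _ _ _ (ek - en) 0 ek φ); eauto; try lia; unfold φ; lra. }
  rewrite (Ord3_T1 S hS (-k) (-pk) (-ek)) in He by (apply Eopp; auto).
  revert He; apply Ord3_conv; try lia; ring.
Qed.

Lemma bwd a n k pn en pk ek : 0 < a <= lenI S / 2 ->
  IZR n * om S = IZR pn + en -> IZR k * om S = IZR pk + ek ->
  -(lenI S / 2 - a) <= en <= lenI S / 2 - a -> -(lenI S / 2 - a) <= ek <= lenI S / 2 - a ->
  (forall s, -a < s < a -> Ord3 S (-n) (-k) 0 s /\ Ord3 S (-k) 0 n s) ->
  forall τ, -a < τ < a -> Ord3 S 0 k n τ.
Proof.
  intros ha En Ek hn hk HL τ hτ.
  pose proof (E0 S) as Z0. pose proof (Eopp S n pn en En) as Emn.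
  pose proof (Eopp S k pk ek Ek) as Emk.
  pose proof (Esub S k n pk ek pn en Ek En) as Enk.
  destruct (HL 0 ltac:(lra)) as [H1 H2].
  destruct (Ord3_distinct S hS _ _ _ _ H1) as [d1 [d2 d3]];
    [eapply cmp_e; [exact Emn|lra]|eapply cmp_e; [exact Emk|lra]|eapply cmp_e; [exact Z0|lra]|].
  destruct (Ord3_distinct S hS _ _ _ _ H2) as [d4 [d5 d6]];
    [eapply cmp_e; [exact Emk|lra]|eapply cmp_e; [exact Z0|lra]|eapply cmp_e; [exact En|lra]|].
  destruct (HL τ hτ) as [Hτ1 Hτ2].
  set (φ := (en - ek) / 2).
  assert (Ha : Ord3 S (-n) (-k) 0 (φ - en)).
  { eapply (T2e S hS (-n) (-k) 0 _ _ _ (-en) (-ek) 0 τ); eauto; unfold φ; lra. }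
  assert (Hb : Ord3 S 0 (n - k) n φ).
  { rewrite (Ord3_T1 S hS n pn en) in Ha by exact En.
    revert Ha; apply Ord3_conv; try lia; ring. }
  assert (Hc : Ord3 S (-k) 0 n φ).
  { eapply (T2e S hS (-k) 0 n _ _ _ (-ek) 0 en τ); eauto; unfold φ; lra. }
  assert (Hd : Ord3 S (-k) 0 (n - k) φ).
  { intros x y z Hx Hy Hz.
    destruct (nonempty S hS n φ) as [w Hw]. eapply cmp_e; [exact En|unfold φ; lra].
    assert (c1 : C x y w) by (apply Hc; auto).
    assert (c2 : C y z w) by (apply Hb; auto).
    apply C_rot in c1.
    assert (c3 := C_trans _ _ _ _ c2 c1).
    apply C_rot, C_rot; auto. }
  assert (He : Ord3 S (-k) 0 (n - k) (τ - ek)).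
  { eapply (T2e S hS (-k) 0 (n - k) _ _ _ (-ek) 0 (en - ek) φ); eauto; try lia; unfold φ; lra. }
  rewrite (Ord3_T1 S hS k pk ek) in He by exact Ek.
  revert He; apply Ord3_conv; try lia; ring.
Qed.

End F.


Section Main.
Variable S : setting.
Hypothesis hS : standing S.
Variable alpha : R.
Hypothesis halpha : 0 < alpha <= 1.

Lemma Ialpha_dec θ : Ialpha S alpha θ -> exists (j : Z) τ, θ = τ + IZR j /\
  -(alpha * lenI S / 2) < τ < alpha * lenI S / 2.
Proof. intros [j Hj]. apply Rabs_def2 in Hj. exists j, (θ - IZR j). split; [ring|lra]. Qed.

Lemma Ialpha_of s : -(alpha * lenI S / 2) < s < alpha * lenI S / 2 -> Ialpha S alpha s.
Proof. intros h. exists 0%Z. simpl IZR. rewrite Rminus_0_r. apply Rabs_def1; lra. Qed.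

Lemma liftJ a b c : (forall τ, -(alpha * lenI S / 2) < τ < alpha * lenI S / 2 -> Ord3 S a b c τ) ->
  forall θ, Ialpha S alpha θ -> Ord3 S a b c θ.
Proof. intros H θ Hθ. destruct (Ialpha_dec θ Hθ) as [j [τ [E h]]]. subst.
  apply Ord3_per; auto. Qed.

Lemma cmpJ_e i p e : IZR i * om S = IZR p + e ->
  -(lenI S / 2 - alpha * lenI S / 2) <= e <= lenI S / 2 - alpha * lenI S / 2 ->
  cmpJ S (Ialpha S alpha) i.
Proof.
  intros E h θ Hθ. destruct (Ialpha_dec θ Hθ) as [j [τ [Eθ hτ]]]. subst.
  replace (τ + IZR j - IZR i * om S) with ((τ - IZR i * om S) + IZR j) by ring.
  apply inI_shift. eapply cmp_e; eauto. lra.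
Qed.

Lemma ext' i : cmpJ S (Ialpha S alpha) i -> exists p e, IZR i * om S = IZR p + e /\
    -(lenI S / 2 - alpha * lenI S / 2) <= e <= lenI S / 2 - alpha * lenI S / 2.
Proof. apply extract; auto. Qed.

Lemma ext_opp i : cmpJ S (Ialpha S alpha) (- i) -> exists p e, IZR i * om S = IZR p + e /\
    -(lenI S / 2 - alpha * lenI S / 2) <= e <= lenI S / 2 - alpha * lenI S / 2.
Proof. intros H. destruct (ext' _ H) as [p [e [E h]]]. exists (-p)%Z, (-e).
  split; [|lra]. rewrite opp_IZR in *. lra. Qed.

Lemma cmpJ_opp i : cmpJ S (Ialpha S alpha) i -> cmpJ S (Ialpha S alpha) (- i).
Proof. intros H. destruct (ext' _ H) as [p [e [E h]]]. eapply cmpJ_e.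
  apply Eopp; eauto. lra. Qed.

Lemma part1 n k :
  lhd S ((- n)%Z :: 0%Z :: k :: n :: nil) (Ialpha S alpha) <->
  lhd S ((- n)%Z :: (- k)%Z :: 0%Z :: n :: nil) (Ialpha S alpha).
Proof.
  destruct (consts S alpha hS halpha) as [[a0 ac] c4].
  split; intros H.
  - apply lhd_of1; auto; [|apply (lhd_xyw S hS _ _ k); auto].
    pose proof H as H'. rewrite lhd4_iff in H'. destruct H' as [[cmn [c0 [ck cn]]] _].
    destruct (ext' _ cn) as [pn [en [En hn]]]. destruct (ext' _ ck) as [pk [ek [Ek hk]]].
    apply lhd3_iff. split; [split; [auto|split; [apply cmpJ_opp; auto|auto]]|].
    apply liftJ. apply (fwd S hS (alpha * lenI S / 2) n k pn en pk ek); try lra; auto.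
    intros s hs. split.
    + apply lhd_xyz in H; auto. apply lhd3_iff in H. apply H. apply Ialpha_of; auto.
    + apply lhd_yzw in H; auto. apply lhd3_iff in H. apply H. apply Ialpha_of; auto.
  - apply lhd_of2; auto; [apply (lhd_xzw S hS _ (-k)); auto|].
    pose proof H as H'. rewrite lhd4_iff in H'. destruct H' as [[cmn [cmk [c0 cn]]] _].
    destruct (ext' _ cn) as [pn [en [En hn]]]. destruct (ext_opp _ cmk) as [pk [ek [Ek hk]]].
    apply lhd3_iff. split; [split; [auto|split; [eapply cmpJ_e; eauto|auto]]|].
    apply liftJ. apply (bwd S hS (alpha * lenI S / 2) n k pn en pk ek); try lra; auto.
    intros s hs. split.
    + apply lhd_xyz in H; auto. apply lhd3_iff in H. apply H. apply Ialpha_of; auto.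
    + apply lhd_yzw in H; auto. apply lhd3_iff in H. apply H. apply Ialpha_of; auto.
Qed.

Lemma inN_opp k : inN S alpha k -> inN S alpha (- k).
Proof.
  unfold inN, comparable. intros H.
  assert (c : cmpJ S (Ialpha S alpha) k).
  { intros t Ht. specialize (H t Ht). inversion H; auto. }
  apply cmpJ_opp in c. intros t Ht. constructor; auto.
Qed.

Lemma part2 n : closest_return S alpha n -> closest_return S alpha (- n).
Proof.
  unfold closest_return. rewrite Z.opp_involutive, Z.abs_opp.
  intros [HN [[H1 H2]|[H1 H2]]]; split; try (apply inN_opp; auto).
  - right. split; auto. intros [k [Hk [k0 [hk Hl]]]]. apply H2.
    exists (- k)%Z. split; [apply inN_opp; auto|]. split; [lia|]. split; [lia|].
    assert (H4 : lhd S ((- n)%Z :: k :: 0%Z :: n :: nil) (Ialpha S alpha)) by (apply lhd_of1; auto).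
    rewrite <- (Z.opp_involutive k) in H4. rewrite <- part1 in H4.
    apply lhd_yzw in H4; auto.
  - left. split; auto. intros [k [Hk [k0 [hk Hl]]]]. apply H2.
    exists (- k)%Z. split; [apply inN_opp; auto|]. split; [lia|]. split; [lia|].
    assert (H4 : lhd S (n :: 0%Z :: k :: (- n)%Z :: nil) (Ialpha S alpha)) by (apply lhd_of2; auto).
    rewrite <- (Z.opp_involutive n) in H4 at 1. rewrite part1 in H4.
    rewrite Z.opp_involutive in H4.
    apply lhd_xyz in H4; auto.
Qed.

End Main.

Theorem mainTheorem7 (S : setting) (hS : standing S) (n k : Z) (alpha : R)
  (halpha : 0 < alpha <= 1) :
  (lhd S ((- n)%Z :: 0%Z :: k :: n :: nil) (Ialpha S alpha) <->
   lhd S ((- n)%Z :: (- k)%Z :: 0%Z :: n :: nil) (Ialpha S alpha)) /\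
  (closest_return S alpha n -> closest_return S alpha (- n)).
Proof. split. apply part1; auto. apply part2; auto. Qed.
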